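(* Fix integers $N\ge 2$ and $K\ge 1$. For every $r\ge 2$, $M^{\text{TransE}}$ does not subsume $M^{\text{RESCAL}}_r$, i.e. $\pi(\mathcal{M}^{\text{RESCAL}}_r)\not\subseteq\pi(\mathcal{M}^{\text{TransE}})$.
   Context: There are $N$ entities and $K$ relations. A score-based model assigns a score $s_k(i,j)\in\mathbb{R}$ to each triple, $i,j\in\{1,\dots,N\}$, $k\in\{1,\dots,K\}$; its scoring tensor $\mathcal{S}\in\mathbb{R}^{N\times N\times K}$ has frontal slices $\mathbf{S}_k$ with $[\mathbf{S}_k]_{ij}=s_k(i,j)$. For a real $N\times N$ matrix $\mathbf{S}$, $\pi(\mathbf{S})$ is the matrix of dense ranks: $\pi_{ij}(\mathbf{S})=1+$ (number of distinct values among entries of $\mathbf{S}$ strictly larger than $s_{ij}$). For tensors, $\pi$ acts slicewise; for a set $X$, $\pi(X)=\{\pi(x):x\in X\}$. RESCAL of size $r$: parameters $\mathbf{A}\in\mathbb{R}^{N\times r}$ (rows $\mathbf{a}_i$), $\mathbf{R}_1,\dots,\mathbf{R}_K\in\mathbb{R}^{r\times r}$, score $\mathbf{a}_i^T\mathbf{R}_k\mathbf{a}_j$. TransE of size $r$: parameters $\mathbf{A}\in\mathbb{R}^{N\times r}$, $\mathbf{R}\in\mathbb{R}^{K\times r}$ (rows $\mathbf{r}_k$), score $-\|\mathbf{a}_i+\mathbf{r}_k-\mathbf{a}_j\|_2^2$. $\mathcal{M}^t_r$ is the set of scoring tensors of all models of type $t$ and size $r$, and $\mathcal{M}^t=\bigcup_{r\in\mathbb{N}^+}\mathcal{M}^t_r$.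 A class $M^{t_2}$ subsumes $M^{t_1}$ if $\pi(\mathcal{M}^{t_1})\subseteq\pi(\mathcal{M}^{t_2})$. *)

(* Defs.v *)
From HB Require Import structures.
From mathcomp Require Import all_boot all_order all_algebra.
From mathcomp Require Import reals.
Set Implicit Arguments. Unset Strict Implicit. Unset Printing Implicit Defensive.
Import Order.TTheory GRing.Theory Num.Theory.
Local Open Scope ring_scope.

(* A scoring tensor: K frontal slices, each an N x N real matrix;
   [S k] i j = s_k(i,j). Entities and relations are indexed from 0. *)
Definition tensor (R : realType) (N K : nat) := {ffun 'I_K -> 'M[R]_N}.

Definition dense_rank_entry (R : realType) (N : nat) (S : 'M[R]_N)
    (i j : 'I_N) : nat :=
  (size (undup [seq S p.1 p.2 | p <- enum {: 'I_N * 'I_N}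
                                & S i j < S p.1 p.2]%R)).+1.

Definition dense_rank (R : realType) (N : nat) (S : 'M[R]_N) : 'M[nat]_N :=
  \matrix_(i, j) dense_rank_entry S i j.

Definition pi_tensor (R : realType) (N K : nat) (S : tensor R N K)
    : {ffun 'I_K -> 'M[nat]_N} :=
  [ffun k => dense_rank (S k)].

Definition is_rescal (R : realType) (N K r : nat) (S : tensor R N K) : Prop :=
  exists (A : 'M[R]_(N, r)) (Rk : 'I_K -> 'M[R]_r),
    forall k i j, S k i j = (row i A *m Rk k *m (row j A)^T) ord0 ord0.

Definition is_transe (R : realType) (N K r : nat) (S : tensor R N K) : Prop :=
  exists (A : 'M[R]_(N, r)) (Rm : 'M[R]_(K, r)),
    forall k i j, S k i j = - \sum_(l < r) (A i l + Rm k l - A j l) ^+ 2.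

Definition is_transe_any (R : realType) (N K : nat) (S : tensor R N K) : Prop :=
  exists r, (0 < r)%N /\ is_transe r S.

(* Main.v *)
Require Import Defs.
From HB Require Import structures.
From mathcomp Require Import all_boot all_order all_algebra.
From mathcomp Require Import reals.
Import Order.TTheory GRing.Theory Num.Theory.
Local Open Scope ring_scope.

Lemma dre_lt (R : realType) (N : nat) (S : 'M[R]_N) a b c d :
  S a b < S c d -> (dense_rank_entry S c d < dense_rank_entry S a b)%N.
Proof.
move=> lt; rewrite /dense_rank_entry ltnS.
have H := @uniq_leq_size _ (S c d :: undup [seq S p.1 p.2 | p <- enum {: 'I_N * 'I_N} & S c d < S p.1 p.2])
   (undup [seq S p.1 p.2 | p <- enum {: 'I_N * 'I_N} & S a b < S p.1 p.2]).
have U : uniq (S c d :: undup [seq S p.1 p.2 | p <- enum {: 'I_N * 'I_N} & S c d < S p.1 p.2]).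
  rewrite /= undup_uniq andbT mem_undup; apply/negP => /mapP [p].
  by rewrite mem_filter => /andP [lp _] eq; move: lp; rewrite -eq ltxx.
have Sub : {subset S c d :: undup [seq S p.1 p.2 | p <- enum {: 'I_N * 'I_N} & S c d < S p.1 p.2] <=
    undup [seq S p.1 p.2 | p <- enum {: 'I_N * 'I_N} & S a b < S p.1 p.2]}.
  move=> v; rewrite inE mem_undup mem_undup => /orP [/eqP -> | /mapP [p]].
    by apply/mapP; exists (c, d) => //; rewrite mem_filter lt mem_enum.
  rewrite mem_filter => /andP [lp _] ->; apply/mapP; exists p => //.
  by rewrite mem_filter mem_enum andbT (lt_trans lt lp).
by have := H U Sub.
Qed.

Theorem theorem2 (R : realType) (N K r : nat) :
  (2 <= N)%N -> (1 <= K)%N -> (2 <= r)%N ->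
  ~ (forall S : tensor R N K, is_rescal r S ->
       exists T : tensor R N K, is_transe_any T /\ pi_tensor T = pi_tensor S).
Proof.
move=> hN hK hr H.
have h0 : (0 < N)%N by apply: leq_trans hN.
have hr0 : (0 < r)%N by apply: leq_trans hr.
pose i0 := Ordinal h0. pose i1 := Ordinal hN. pose k0 := Ordinal hK.
pose l0 := Ordinal hr0.
pose A : 'M[R]_(N, r) := \matrix_(i, l) (if (i == i0) && (l == l0) then 1 else 0).
pose S : tensor R N K := [ffun k => \matrix_(i, j) (row i A *m 1%:M *m (row j A)^T) ord0 ord0].
have [T [[r' [_ [B [Rm HT]]]] E]] : exists T : tensor R N K, is_transe_any T /\ pi_tensor T = pi_tensor S.
  apply: H; exists A, (fun _ => 1%:M) => k i j; by rewrite ffunE mxE.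
have Sval : forall i j, S k0 i j = \sum_l A i l * A j l.
  move=> i j; rewrite ffunE mxE mulmx1 mxE; apply: eq_bigr => l _.
  by rewrite !mxE.
have S00 : S k0 i0 i0 = 1.
  rewrite Sval (bigD1 l0) //= big1 ?addr0; first by rewrite !mxE !eqxx mulr1.
  by move=> l /negbTE nl; rewrite !mxE nl andbF mul0r.
have S11 : S k0 i1 i1 = 0.
  rewrite Sval big1 // => l _; rewrite !mxE.
  have -> : (i1 == i0) = false by apply/eqP => /(congr1 val).
  by rewrite mul0r.
have Tdiag : T k0 i0 i0 = T k0 i1 i1.
  have F : forall i, T k0 i i = - \sum_(l < r') Rm k0 l ^+ 2.
    move=> i; rewrite HT; apply: f_equal; apply: eq_bigr => l _.
    by rewrite addrAC subrr add0r.
  by rewrite !F.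
have E2 : forall i, dense_rank_entry (T k0) i i = dense_rank_entry (S k0) i i.
  move=> i; have := congr1 (fun f : {ffun 'I_K -> 'M[nat]_N} => f k0 i i) E; rewrite /= !ffunE !mxE //.
have : dense_rank_entry (T k0) i0 i0 = dense_rank_entry (T k0) i1 i1.
  by rewrite /dense_rank_entry Tdiag.
rewrite !E2 => eq.
have := @dre_lt R N (S k0) i1 i1 i0 i0.
by rewrite S00 S11 ltr01 eq ltnn => /(_ isT).
Qed.
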